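(* Let $F_\infty$ be the free group on countably many generators $a_1,a_2,\dots$, and let $T$ be its Cayley graph with respect to $\{a_i\}$ (vertices: reduced words; $t$ adjacent to $ta_i^{\pm1}$), a tree rooted at the empty word $\emptyset$. For $t\ne\emptyset$ let $\hat t$ be the word obtained by deleting the last letter of $t$. Let $G=\mathrm{Aut}(T)$ be the group of graph automorphisms of $T$, acting on $\mathbb C^T$ (and on $\ell_1(T),\ell_2(T)$) by $u(g)x=(x(g^{-1}t))_{t\in T}$. Define $R:\ell_2(T)\to\ell_\infty(T)$ by $(Rx)(s)=x(\hat s)$ for $s\neq\emptyset$, $(Rx)(\emptyset)=0$, and $L:\ell_1(T)\to\ell_1(T)$ by $Le_t=e_{\hat t}$ for $t\ne\emptyset$, $Le_\emptyset=0$. Then: (1) there is no linear map $\Lambda:\ell_2(T)\to\mathbb C^T$ with $u(g)\Lambda=\Lambda u(g)$ for all $g\in G$ such that $R-\Lambda$ maps $\ell_2(T)$ boundedly into $\ell_2(T)$; (2) there is no linear map $\Lambda:\ell_1(T)\to\mathbb C^T$ with $u(g)\Lambda=\Lambda u(g)$ for all $g\in G$ such that $(L-\Lambda)x\in\ell_2(T)$ and $\|(L-\Lambda)x\|_2\le C\|x\|_2$ for all $x\in\ell_1(T)$.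
   Context: $e_t$ denotes the canonical basis vector at $t\in T$. (It is known that the commutators $u(g)R-Ru(g)$ and $u(g)L-Lu(g)$ extend to bounded operators on $\ell_2(T)$ of norm at most $2$, so $R$ and $L$ are linear $\mathrm{Aut}(T)$-centralizers $\ell_2(T)\curvearrowright\ell_2(T)$.) *)

(* Defs.v *)
From Stdlib Require Import Reals List Bool Arith ClassicalEpsilon.
Import ListNotations.
Open Scope R_scope.

Record Cplx := mkC { re : R; im : R }.
Definition C0 : Cplx := mkC 0 0.
Definition Cadd (z w : Cplx) : Cplx := mkC (re z + re w) (im z + im w).
Definition Csub (z w : Cplx) : Cplx := mkC (re z - re w) (im z - im w).
Definition Cmul (z w : Cplx) : Cplx :=
  mkC (re z * re w - im z * im w) (re z * im w + im z * re w).
Definition Cnorm2 (z : Cplx) : R := re z * re z + im z * im z.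
Definition Cabs (z : Cplx) : R := sqrt (Cnorm2 z).

(* A letter (i, b) stands for a_i if b = true and a_i^{-1} if b = false.
   A word is stored REVERSED: the head of the list is the LAST letter of
   the word.  So  t a_i^{+-1}  is  (i,b) :: t  and  hat t  is  tl t. *)
Definition letter := (nat * bool)%type.
Definition inv_letter (a : letter) : letter := (fst a, negb (snd a)).
Definition letter_eqb (a b : letter) : bool :=
  Nat.eqb (fst a) (fst b) && Bool.eqb (snd a) (snd b).

Fixpoint reducedb (w : list letter) : bool :=
  match w with
  | [] => true
  | a :: w' =>
      match w' with
      | [] => true
      | b :: _ => negb (letter_eqb b (inv_letter a)) && reducedb w'
      end
  end.

Definition T := { w : list letter | reducedb w = true }.
Definition word (t : T) : list letter := proj1_sig t.

Lemma reduced_tl (w : list letter) : reducedb w = true -> reducedb (tl w) = true.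
Proof.
  destruct w as [|a w]; simpl; auto.
  destruct w as [|b w]; simpl; auto.
  intros H; apply andb_prop in H; destruct H as [_ H]; exact H.
Qed.

Definition root : T := exist _ [] eq_refl.

(* hat t : delete the last letter (root is sent to itself, unused) *)
Definition hat (t : T) : T := exist _ (tl (word t)) (reduced_tl _ (proj2_sig t)).

Definition is_root (t : T) : bool :=
  match word t with [] => true | _ => false end.

(* adjacency in the Cayley graph: t ~ t a_i^{+-1}, i.e. one vertex is
   the parent (hat) of the other *)
Definition adj (s t : T) : Prop :=
  (word s <> [] /\ hat s = t) \/ (word t <> [] /\ hat t = s).

Definition is_aut (g ginv : T -> T) : Prop :=
  (forall t, g (ginv t) = t) /\ (forall t, ginv (g t) = t) /\
  (forall s t, adj s t <-> adj (g s) (g t)).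

Definition vec := T -> Cplx.
Definition vadd (x y : vec) : vec := fun t => Cadd (x t) (y t).
Definition vsub (x y : vec) : vec := fun t => Csub (x t) (y t).
Definition vscale (c : Cplx) (x : vec) : vec := fun t => Cmul c (x t).

(* u(g) x = (x(g^{-1} t))_t ; we pass the inverse ginv of g *)
Definition act (ginv : T -> T) (x : vec) : vec := fun t => x (ginv t).

Definition sumsq (x : vec) (l : list T) : R :=
  fold_right (fun t acc => Cnorm2 (x t) + acc) 0 l.
Definition sumabs (x : vec) (l : list T) : R :=
  fold_right (fun t acc => Cabs (x t) + acc) 0 l.

Definition in_l2 (x : vec) : Prop :=
  exists B, forall l, NoDup l -> sumsq x l <= B.
Definition in_l1 (x : vec) : Prop :=
  exists B, forall l, NoDup l -> sumabs x l <= B.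

(* ||y||_2 <= K ||x||_2  (unfolded: every bound B on ||x||_2^2 gives
   the bound K^2 B on ||y||_2^2) *)
Definition l2_bound (y x : vec) (K : R) : Prop :=
  forall B, (forall l, NoDup l -> sumsq x l <= B) ->
  forall l, NoDup l -> sumsq y l <= K ^ 2 * B.

Definition Rop (x : vec) : vec :=
  fun s => if is_root s then C0 else x (hat s).

Definition nth_letter (n : nat) : letter := (Nat.div2 n, Nat.odd n).

(* value of x at the n-th child  s (nth_letter n)  of s, or 0 if that
   word is not reduced (i.e. it is the parent of s) *)
Definition child_val (x : vec) (s : T) (n : nat) : Cplx :=
  let w := nth_letter n :: word s in
  match reducedb w as b return reducedb w = b -> Cplx with
  | true => fun H => x (exist _ w H)
  | false => fun _ => C0
  end eq_refl.

Definition series_value (f : nat -> R) : R :=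
  epsilon (inhabits 0) (fun r => infinite_sum f r).

(* L e_t = e_{hat t} (t <> root), L e_root = 0, extended to l_1:
   (L x)(s) = sum over the children t of s (hat t = s, t <> root) of x(t) *)
Definition Lop (x : vec) : vec :=
  fun s => mkC (series_value (fun n => re (child_val x s n)))
               (series_value (fun n => im (child_val x s n))).

(* Main.v *)
Require Import Defs.
From Stdlib Require Import Reals List.
From Stdlib Require Import Lra Lia Bool Arith ClassicalEpsilon FunctionalExtensionality Eqdep_dec FinFun.
Import ListNotations.
Open Scope R_scope.

Lemma T_ext (s t : T) : word s = word t -> s = t.
Proof.
  destruct s as [w Hw], t as [v Hv]; simpl; intros E; subst v.
  f_equal. apply UIP_dec. exact bool_dec.
Qed.

Lemma letter_eqb_spec (x y : letter) : letter_eqb x y = true <-> x = y.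
Proof.
  destruct x as [i b], y as [j c]; unfold letter_eqb; simpl.
  rewrite andb_true_iff, Nat.eqb_eq, eqb_true_iff. split.
  - intros [-> ->]; reflexivity.
  - intros H; injection H; auto.
Qed.

Definition letter_dec : forall x y : letter, {x = y} + {x <> y}.
Proof. decide equality; [apply bool_dec | apply Nat.eq_dec]. Defined.

Definition invol (f : letter -> letter) := forall x, f (f x) = x.
Definition inv_comm (f : letter -> letter) := forall x, f (inv_letter x) = inv_letter (f x).

Lemma good_map f : invol f -> inv_comm f -> forall x y,
  letter_eqb (f x) (inv_letter (f y)) = letter_eqb x (inv_letter y).
Proof.
  intros Hi Hc x y. rewrite <- Hc.
  apply eq_true_iff_eq. rewrite !letter_eqb_spec. split; intros H; [|now subst].
  rewrite <- (Hi x), H, Hi. reflexivity.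
Qed.

Lemma reduced_map f : invol f -> inv_comm f -> forall w, reducedb (map f w) = reducedb w.
Proof.
  intros Hi Hc. induction w as [|x w IH]; [reflexivity|].
  destruct w as [|y w]; [reflexivity|].
  change (reducedb (map f (x :: y :: w))) with
    (negb (letter_eqb (f y) (inv_letter (f x))) && reducedb (map f (y :: w))).
  rewrite IH, good_map by assumption. reflexivity.
Qed.

Definition mkF (f : list letter -> list letter)
  (f_red : forall w, reducedb w = true -> reducedb (f w) = true) (t : T) : T :=
  exist _ (f (word t)) (f_red _ (proj2_sig t)).

Lemma mkF_aut f f_red
  (f_inv : forall w, reducedb w = true -> f (f w) = w)
  (f_adj : forall x w, reducedb (x :: w) = true ->
     (exists m, f (x :: w) = m :: f w) \/ (exists m, f w = m :: f (x :: w))) :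
  is_aut (mkF f f_red) (mkF f f_red).
Proof.
  assert (Hinv : forall t, mkF f f_red (mkF f f_red t) = t).
  { intros t. apply T_ext. simpl. apply f_inv. exact (proj2_sig t). }
  assert (Hfw : forall s t, adj s t -> adj (mkF f f_red s) (mkF f f_red t)).
  { assert (K : forall s t, word s <> [] -> hat s = t ->
       adj (mkF f f_red s) (mkF f f_red t)).
    { intros s t Hne Hh.
      assert (Ew : word t = tl (word s)) by (rewrite <- Hh; reflexivity).
      pose proof (proj2_sig s) as Hr. change (reducedb (word s) = true) in Hr.
      destruct (word s) as [|x w] eqn:Es; [congruence|]. simpl in Ew.
      destruct (f_adj x w Hr) as [[m Hm]|[m Hm]].
      - left. split; simpl; [rewrite Es, Hm; discriminate|].
        apply T_ext. simpl. rewrite Es, Hm, Ew. reflexivity.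
      - right. split; simpl; [rewrite Ew, Hm; discriminate|].
        apply T_ext. simpl. rewrite Ew, Hm, Es. reflexivity. }
    intros s t [[Hne Hh]|[Hne Hh]].
    - apply K; assumption.
    - unfold adj. rewrite or_comm. apply K; assumption. }
  split; [exact Hinv|]. split; [exact Hinv|].
  intros s t; split; [apply Hfw|].
  intros H. apply Hfw in H. rewrite !Hinv in H. exact H.
Qed.

Definition swp (i j : nat) : nat := if Nat.eqb j 0 then i else if Nat.eqb j i then 0%nat else j.
Definition sig_l (i : nat) (x : letter) : letter := (swp i (fst x), snd x).

Lemma swp_invol i j : swp i (swp i j) = j.
Proof.
  unfold swp.
  destruct (Nat.eqb_spec j 0) as [->|H0].
  - destruct (Nat.eqb_spec i 0) as [->|H1]; [reflexivity|].
    rewrite Nat.eqb_refl. reflexivity.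
  - destruct (Nat.eqb_spec j i) as [->|H1].
    + rewrite Nat.eqb_refl. reflexivity.
    + apply Nat.eqb_neq in H0, H1. rewrite H0, H1. reflexivity.
Qed.

Lemma sig_invol i : invol (sig_l i).
Proof. intros [j b]; unfold sig_l; simpl; rewrite swp_invol; reflexivity. Qed.
Lemma sig_comm i : inv_comm (sig_l i).
Proof. intros [j b]; reflexivity. Qed.

Definition psiw (i : nat) (w : list letter) := map (sig_l i) w.
Lemma psiw_red i w : reducedb w = true -> reducedb (psiw i w) = true.
Proof. intros H; unfold psiw; rewrite reduced_map; auto using sig_invol, sig_comm. Qed.
Lemma psiw_inv i w : reducedb w = true -> psiw i (psiw i w) = w.
Proof.
  intros _; unfold psiw; rewrite map_map.
  rewrite map_ext with (g := fun x => x) by apply sig_invol. apply map_id.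
Qed.
Lemma psiw_adj i x w : reducedb (x :: w) = true ->
  (exists m, psiw i (x :: w) = m :: psiw i w) \/ (exists m, psiw i w = m :: psiw i (x :: w)).
Proof. intros _; left; exists (sig_l i x); reflexivity. Qed.

Definition psi (i : nat) : T -> T := mkF (psiw i) (psiw_red i).
Lemma psi_aut i : is_aut (psi i) (psi i).
Proof. apply mkF_aut; [apply psiw_inv | apply psiw_adj]. Qed.

(* the flip swapping root and [a] *)
Definition a0 : letter := (0%nat, true).
Definition phi (x : letter) : letter :=
  (fst x, if Nat.eqb (fst x) 0 then negb (snd x) else snd x).
Lemma phi_invol : invol phi.
Proof. intros [j b]; unfold phi; simpl. destruct (Nat.eqb j 0); rewrite ?negb_involutive; reflexivity. Qed.
Lemma phi_comm : inv_comm phi.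
Proof. intros [j b]; unfold phi, inv_letter; simpl. destruct (Nat.eqb j 0); reflexivity. Qed.

Fixpoint gw (w : list letter) : list letter :=
  match w with
  | [] => [a0]
  | x :: t => match t with
              | [] => if letter_eqb x a0 then [] else [phi x; a0]
              | _ => phi x :: gw t
              end
  end.

Lemma gw_head y t : ~ (t = [] /\ y = a0) -> exists r, gw (y :: t) = phi y :: r.
Proof.
  intros H. destruct t as [|z t].
  - simpl. destruct (letter_eqb y a0) eqn:E.
    + apply letter_eqb_spec in E. tauto.
    + eexists; reflexivity.
  - eexists; reflexivity.
Qed.

Lemma phi_a0 : phi a0 = inv_letter a0.
Proof. reflexivity. Qed.

Lemma gw_red w : reducedb w = true -> reducedb (gw w) = true.
Proof.
  induction w as [|x w IH]; intros Hr; [reflexivity|].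
  destruct w as [|y w].
  - simpl. destruct (letter_eqb x a0) eqn:E; [reflexivity|].
    destruct x as [j b]. destruct j as [|j]; destruct b; simpl in *; try reflexivity; discriminate.
  - change (gw (x :: y :: w)) with (phi x :: gw (y :: w)).
    change (reducedb (x :: y :: w)) with (negb (letter_eqb y (inv_letter x)) && reducedb (y :: w)) in Hr.
    apply andb_prop in Hr. destruct Hr as [H1 H2].
    specialize (IH H2).
    destruct (gw (y :: w)) as [|z r] eqn:E; [reflexivity|].
    assert (Hz : z = phi y).
    { destruct w as [|u w].
      - simpl in E. destruct (letter_eqb y a0); [discriminate|]. injection E; auto.
      - simpl in E. injection E; auto. }
    subst z.
    change (reducedb (phi x :: phi y :: r)) with
      (negb (letter_eqb (phi y) (inv_letter (phi x))) && reducedb (phi y :: r)).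
    rewrite good_map by (apply phi_invol || apply phi_comm). rewrite H1, IH. reflexivity.
Qed.

Lemma gw_inv w : reducedb w = true -> gw (gw w) = w.
Proof.
  induction w as [|x w IH]; intros Hr; [reflexivity|].
  destruct w as [|y w].
  - simpl. destruct (letter_eqb x a0) eqn:E.
    + apply letter_eqb_spec in E. subst. reflexivity.
    + simpl. rewrite phi_invol. reflexivity.
  - change (gw (x :: y :: w)) with (phi x :: gw (y :: w)).
    change (reducedb (x :: y :: w)) with (negb (letter_eqb y (inv_letter x)) && reducedb (y :: w)) in Hr.
    apply andb_prop in Hr. destruct Hr as [H1 H2].
    specialize (IH H2).
    destruct (gw (y :: w)) as [|z r] eqn:E.
    +
      assert (w = [] /\ y = a0) as [-> ->].
      { destruct w as [|u w]; [|discriminate]. simpl in E.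
        destruct (letter_eqb y a0) eqn:E2; [|discriminate]. apply letter_eqb_spec in E2; auto. }
      simpl. destruct (letter_eqb (phi x) a0) eqn:E3.
      * apply letter_eqb_spec in E3. exfalso.
        assert (x = inv_letter a0) by (rewrite <- (phi_invol x), E3; reflexivity). subst x.
        simpl in H1. discriminate.
      * rewrite phi_invol. reflexivity.
    + change (gw (phi x :: z :: r)) with (phi (phi x) :: gw (z :: r)).
      rewrite (phi_invol x), IH. reflexivity.
Qed.

Lemma gw_adj x w : reducedb (x :: w) = true ->
  (exists m, gw (x :: w) = m :: gw w) \/ (exists m, gw w = m :: gw (x :: w)).
Proof.
  intros _. destruct w as [|y w].
  - simpl. destruct (letter_eqb x a0) eqn:E.
    + right. exists a0. reflexivity.
    + left. exists (phi x). reflexivity.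
  - left. exists (phi x). reflexivity.
Qed.

Definition gflip : T -> T := mkF gw gw_red.
Lemma gflip_aut : is_aut gflip gflip.
Proof. apply mkF_aut; [apply gw_inv | apply gw_adj]. Qed.

Lemma Ceq (z w : Cplx) : re z = re w -> im z = im w -> z = w.
Proof. destruct z, w; simpl; intros -> ->; reflexivity. Qed.

Definition Cone : Cplx := mkC 1 0.
Definition indv (p : T -> bool) : vec := fun s => if p s then Cone else C0.
Definition isw (w : list letter) (s : T) : bool :=
  if list_eq_dec letter_dec (word s) w then true else false.
Definition ev (t : T) : vec := indv (isw (word t)).

Lemma sumsq_ind p l : sumsq (indv p) l = INR (length (filter p l)).
Proof.
  induction l as [|t l IH]; [reflexivity|].
  unfold sumsq in *; simpl. rewrite IH. unfold indv.
  destruct (p t); cbn -[INR]; [rewrite S_INR|]; unfold Cnorm2; simpl; ring.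
Qed.

Lemma sumabs_ind p l : sumabs (indv p) l = INR (length (filter p l)).
Proof.
  induction l as [|t l IH]; [reflexivity|].
  unfold sumabs in *; simpl. rewrite IH. unfold indv, Cabs, Cnorm2.
  destruct (p t); cbn -[INR]; [rewrite S_INR|].
  - replace (1 * 1 + 0 * 0) with 1 by ring. rewrite sqrt_1. ring.
  - replace (0 * 0 + 0 * 0) with 0 by ring. rewrite sqrt_0. ring.
Qed.

Lemma filter_len_bound (p : T -> bool) (S l : list T) :
  (forall s, p s = true -> In s S) -> NoDup l -> (length (filter p l) <= length S)%nat.
Proof.
  intros HS Hl. apply NoDup_incl_length.
  - apply NoDup_filter; exact Hl.
  - intros s Hs. apply filter_In in Hs. apply HS; tauto.
Qed.

Lemma ind_sq_bound p S : (forall s, p s = true -> In s S) ->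
  forall l, NoDup l -> sumsq (indv p) l <= INR (length S).
Proof. intros HS l Hl. rewrite sumsq_ind. apply le_INR, filter_len_bound; auto. Qed.

Lemma ind_l2 p S : (forall s, p s = true -> In s S) -> in_l2 (indv p).
Proof. intros HS. exists (INR (length S)). apply ind_sq_bound; auto. Qed.

Lemma ind_l1 p S : (forall s, p s = true -> In s S) -> in_l1 (indv p).
Proof. intros HS. exists (INR (length S)). intros l Hl. rewrite sumabs_ind.
  apply le_INR, filter_len_bound; auto. Qed.

Lemma ev_supp t : forall s, isw (word t) s = true -> In s [t].
Proof. intros s. unfold isw. destruct (list_eq_dec _ _ _) as [E|E]; [|discriminate].
  intros _. left. symmetry. apply T_ext. exact E. Qed.

Definition ti (i : nat) : T := exist _ [(i, true)] eq_refl.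
Lemma ti_inj : Injective ti.
Proof. intros i j H. apply (f_equal word) in H. simpl in H. congruence. Qed.

Definition pN (N : nat) (s : T) : bool :=
  match word s with [(i, true)] => Nat.ltb i N | _ => false end.
Definition xN (N : nat) : vec := indv (pN N).

Lemma xN_supp N : forall s, pN N s = true -> In s (map ti (seq 0 N)).
Proof.
  intros s. unfold pN. destruct (word s) as [|[i b] [|y w]] eqn:E; try discriminate;
  destruct b; try discriminate. intros H. apply Nat.ltb_lt in H.
  apply in_map_iff. exists i. split.
  - apply T_ext. rewrite E. reflexivity.
  - apply in_seq. lia.
Qed.

Lemma len_supp N : length (map ti (seq 0 N)) = N.
Proof. rewrite length_map, length_seq. reflexivity. Qed.

Lemma xN_S N : xN (S N) = vadd (xN N) (ev (ti N)).
Proof.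
  apply functional_extensionality. intros s.
  unfold xN, vadd, ev, indv, pN, isw. simpl.
  destruct (list_eq_dec letter_dec (word s) [(N, true)]) as [E|E].
  - rewrite E. rewrite Nat.ltb_irrefl. assert (Nat.ltb N (S N) = true) as -> by (apply Nat.ltb_lt; lia).
    apply Ceq; simpl; ring.
  - destruct (word s) as [|[i b] [|y w]]; try (apply Ceq; simpl; ring).
    destruct b; [|apply Ceq; simpl; ring].
    assert (i <> N) by (intro; subst; apply E; reflexivity).
    destruct (Nat.ltb_spec i (S N)), (Nat.ltb_spec i N); try lia; apply Ceq; simpl; ring.
Qed.

Lemma xN_0 : forall s, xN 0 s = C0.
Proof. intros s. unfold xN, indv, pN. destruct (word s) as [|[i b] [|y w]]; try reflexivity;
  destruct b; try reflexivity. Qed.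

Lemma sumsq_const (v : vec) z : (forall i, v (ti i) = z) ->
  forall N k, sumsq v (map ti (seq k N)) = INR N * Cnorm2 z.
Proof.
  intros Hv. induction N as [|N IH]; intros k; [simpl; unfold sumsq; simpl; ring|].
  simpl seq. simpl map. unfold sumsq in *. simpl fold_right. rewrite IH, Hv, S_INR. ring.
Qed.

Lemma nodup_supp N : NoDup (map ti (seq 0 N)).
Proof. apply Injective_map_NoDup; [apply ti_inj | apply seq_NoDup]. Qed.

Lemma const_l2_zero (v : vec) z : (forall i, v (ti i) = z) -> in_l2 v -> Cnorm2 z = 0.
Proof.
  intros Hv [B HB].
  assert (Hq : 0 <= Cnorm2 z) by (unfold Cnorm2; nra).
  destruct (Rle_lt_or_eq_dec _ _ Hq) as [Hlt|Heq]; [|auto].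
  exfalso. destruct (INR_archimed (Cnorm2 z) B Hlt) as [N HN].
  specialize (HB _ (nodup_supp N)). rewrite (sumsq_const v z Hv) in HB. lra.
Qed.

Lemma series_value_eq f r : infinite_sum f r -> series_value f = r.
Proof.
  intros H. unfold series_value.
  pose proof (epsilon_spec (inhabits 0) (fun r => infinite_sum f r) (ex_intro _ r H)) as Hs.
  eapply uniqueness_sum; eauto.
Qed.

Lemma infinite_sum_ev f r M : (forall n, (n >= M)%nat -> sum_f_R0 f n = r) -> infinite_sum f r.
Proof.
  intros H eps He. exists M. intros n Hn. rewrite H by lia. unfold Rdist.
  rewrite Rminus_diag, Rabs_R0. lra.
Qed.

Lemma sum_zero f : (forall n, f n = 0) -> forall m, sum_f_R0 f m = 0.
Proof. intros H m. induction m; simpl; rewrite ?IHm, H; ring. Qed.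

Definition delta (k n : nat) : R := if Nat.eqb n k then 1 else 0.
Lemma sum_delta k m : sum_f_R0 (delta k) m = if Nat.leb k m then 1 else 0.
Proof.
  induction m as [|m IH]; cbn [sum_f_R0].
  - unfold delta. destruct k; reflexivity.
  - rewrite IH. unfold delta.
    destruct (Nat.leb_spec k m), (Nat.eqb_spec (S m) k), (Nat.leb_spec k (S m)); try lia; ring.
Qed.

Definition fN (N n : nat) : R :=
  re (if (if Nat.odd n then Nat.ltb (Nat.div2 n) N else false) then Cone else C0).

Lemma fN_S N n : fN (S N) n = fN N n + delta (2 * N + 1) n.
Proof.
  unfold fN, delta. pose proof (Nat.div2_odd n) as Hd.
  destruct (Nat.odd n); simpl in Hd.
  - destruct (Nat.ltb_spec (Nat.div2 n) (S N)), (Nat.ltb_spec (Nat.div2 n) N),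
      (Nat.eqb_spec n (2 * N + 1)); simpl; try lia; ring.
  - destruct (Nat.eqb_spec n (2 * N + 1)); simpl; try lia; ring.
Qed.

Lemma sum_fN N m : (m >= 2 * N)%nat -> sum_f_R0 (fN N) m = INR N.
Proof.
  revert m. induction N as [|N IH]; intros m Hm.
  - simpl. apply sum_zero. intros n. unfold fN. destruct (Nat.odd n); reflexivity.
  - rewrite (sum_eq _ (fun n => fN N n + delta (2 * N + 1) n)) by (intros; apply fN_S).
    rewrite sum_plus, IH by lia. rewrite sum_delta.
    destruct (Nat.leb_spec (2 * N + 1) m); [|lia]. rewrite S_INR. ring.
Qed.

Lemma child_val_red x s n (H : reducedb (nth_letter n :: word s) = true) :
  child_val x s n = x (exist _ _ H).
Proof.
  unfold child_val.
  generalize (@eq_refl bool (reducedb (nth_letter n :: word s))).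
  generalize (reducedb (nth_letter n :: word s)) at 2 3.
  intros b; destruct b; intros E.
  - f_equal. apply T_ext. reflexivity.
  - congruence.
Qed.

Lemma child_val_cases x s n :
  child_val x s n = C0 \/ exists H, child_val x s n = x (exist _ (nth_letter n :: word s) H).
Proof.
  destruct (reducedb (nth_letter n :: word s)) eqn:E.
  - right. exists E. apply child_val_red.
  - left. unfold child_val.
    generalize (@eq_refl bool (reducedb (nth_letter n :: word s))).
    generalize (reducedb (nth_letter n :: word s)) at 2 3.
    intros b; destruct b; intros E'; [congruence|reflexivity].
Qed.

Lemma act_ev (F : T -> T) (HF : forall x, F (F x) = x) t : act F (ev t) = ev (F t).
Proof.
  apply functional_extensionality. intros s. unfold act, ev, indv, isw.
  destruct (list_eq_dec letter_dec (word (F s)) (word t)) as [E1|E1],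
    (list_eq_dec letter_dec (word s) (word (F t))) as [E2|E2]; try reflexivity; exfalso.
  all: first [ apply T_ext in E1; apply E2; rewrite <- E1, HF; reflexivity
             | apply T_ext in E2; apply E1; rewrite E2, HF; reflexivity ].
Qed.

Lemma psi_root i : psi i root = root.
Proof. apply T_ext. reflexivity. Qed.
Lemma psi_ti i : psi i (ti i) = ti 0.
Proof. apply T_ext. simpl. unfold psiw, sig_l, swp; simpl. rewrite Nat.eqb_refl.
  destruct (Nat.eqb_spec i 0) as [->|]; reflexivity. Qed.
Lemma psi_t0 i : psi i (ti 0) = ti i.
Proof. apply T_ext. reflexivity. Qed.
Lemma g_root : gflip root = ti 0.
Proof. apply T_ext. reflexivity. Qed.
Lemma psi_invol i x : psi i (psi i x) = x.
Proof. destruct (psi_aut i) as [H _]. apply H. Qed.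
Lemma g_invol x : gflip (gflip x) = x.
Proof. destruct gflip_aut as [H _]. apply H. Qed.

Lemma key (D : vec -> Prop)
  (HD : forall p S, (forall s, p s = true -> In s S) -> D (indv p)) (Lam : vec -> vec)
  (Hadd : forall x y, D x -> D y -> Lam (vadd x y) = vadd (Lam x) (Lam y))
  (Hsc : forall (c : Cplx) x, D x -> Lam (vscale c x) = vscale c (Lam x))
  (Hcomm : forall g ginv, is_aut g ginv -> forall x, D x -> Lam (act ginv x) = act ginv (Lam x)) :
  (forall i, Lam (ev root) (ti i) = Lam (ev root) (ti 0)) /\
  (forall N, re (Lam (xN N) root) = INR N * re (Lam (ev root) (ti 0))).
Proof.
  assert (Dev : forall t, D (ev t)) by (intros t; eapply HD; apply ev_supp).
  assert (E1 : forall i, Lam (ev root) = act (psi i) (Lam (ev root))).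
  { intros i. rewrite <- (Hcomm (psi i) (psi i) (psi_aut i)) by apply Dev.
    rewrite act_ev by apply psi_invol. rewrite psi_root. reflexivity. }
  assert (E2 : Lam (ev (ti 0)) = act gflip (Lam (ev root))).
  { rewrite <- (Hcomm gflip gflip gflip_aut) by apply Dev.
    rewrite act_ev by apply g_invol. rewrite g_root. reflexivity. }
  assert (E3 : forall i, Lam (ev (ti i)) = act (psi i) (Lam (ev (ti 0)))).
  { intros i. rewrite <- (Hcomm (psi i) (psi i) (psi_aut i)) by apply Dev.
    rewrite act_ev by apply psi_invol. rewrite psi_t0. reflexivity. }
  assert (P1 : forall i, Lam (ev root) (ti i) = Lam (ev root) (ti 0)).
  { intros i. pose proof (f_equal (fun f => f (ti i)) (E1 i)) as H. cbv beta in H.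
    rewrite H. unfold act. rewrite psi_ti. reflexivity. }
  split; [exact P1|].
  assert (P2 : forall i, Lam (ev (ti i)) root = Lam (ev root) (ti 0)).
  { intros i. rewrite E3. unfold act. rewrite psi_root, E2. unfold act.
    rewrite g_root. reflexivity. }
  intros N. induction N as [|N IH].
  - assert (Z : xN 0 = vscale C0 (xN 0)).
    { apply functional_extensionality; intros s. unfold vscale. rewrite xN_0.
      apply Ceq; simpl; ring. }
    rewrite Z, Hsc by (eapply HD; apply xN_supp). unfold vscale. simpl. ring.
  - rewrite xN_S, Hadd by (apply Dev || (eapply HD; apply xN_supp)).
    unfold vadd, Cadd. cbn [re]. rewrite IH, P2, S_INR. ring.
Qed.

Lemma big_N (K : R) : exists N : nat, K ^ 2 + 1 < INR N.
Proof. destruct (INR_archimed 1 (K ^ 2 + 1)) as [N HN]; [lra|]. exists N. lra. Qed.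

Lemma final_contra (K : R) (y : nat -> vec)
  (H : forall N : nat, INR N * INR N <= Cnorm2 (y N root))
  (Hb : forall N : nat, l2_bound (y N) (xN N) K) : False.
Proof.
  destruct (big_N K) as [N HN].
  specialize (Hb N (INR (length (map ti (seq 0 N)))) (ind_sq_bound _ _ (xN_supp N)) [root] (NoDup_cons root (in_nil (a:=root)) (NoDup_nil _))).
  rewrite len_supp in Hb. unfold sumsq in Hb. simpl in Hb.
  specialize (H N).
  assert (0 <= K ^ 2) by (apply pow2_ge_0). nra.
Qed.

Lemma Rop_ev_root i : Rop (ev root) (ti i) = Cone.
Proof. unfold Rop, ev, indv, isw. simpl. reflexivity. Qed.

Lemma part1 : ~ (exists Lam : vec -> vec,
       (forall x y, in_l2 x -> in_l2 y -> Lam (vadd x y) = vadd (Lam x) (Lam y)) /\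
       (forall (c : Cplx) x, in_l2 x -> Lam (vscale c x) = vscale c (Lam x)) /\
       (forall g ginv, is_aut g ginv ->
          forall x, in_l2 x -> Lam (act ginv x) = act ginv (Lam x)) /\
       (exists K : R, forall x, in_l2 x ->
          in_l2 (vsub (Rop x) (Lam x)) /\ l2_bound (vsub (Rop x) (Lam x)) x K)).
Proof.
  intros [Lam [Hadd [Hsc [Hcomm [K HK]]]]].
  destruct (key in_l2 ind_l2 Lam Hadd Hsc Hcomm) as [P1 P2].
  assert (Dev : forall t, in_l2 (ev t)) by (intros t; eapply ind_l2; apply ev_supp).
  set (c := Lam (ev root) (ti 0)) in *.
  assert (Hc : re c = 1).
  { destruct (HK _ (Dev root)) as [Hl _].
    assert (Hv : forall i, vsub (Rop (ev root)) (Lam (ev root)) (ti i) = Csub Cone c).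
    { intros i. unfold vsub. rewrite Rop_ev_root, P1. reflexivity. }
    pose proof (const_l2_zero _ _ Hv Hl) as H0.
    unfold Cnorm2, Csub, Cone in H0; simpl in H0. nra. }
  apply (final_contra K (fun N => vsub (Rop (xN N)) (Lam (xN N)))).
  - intros N. unfold vsub, Cnorm2, Csub. cbn [re im].
    replace (re (Rop (xN N) root)) with 0 by reflexivity.
    rewrite P2, Hc. match goal with |- _ <= _ + ?u * ?u => pose proof (Rle_0_sqr u); unfold Rsqr in *; nra end.
  - intros N. apply HK. eapply ind_l2. apply xN_supp.
Qed.

Lemma Lop_ev_root i : Lop (ev root) (ti i) = C0.
Proof.
  assert (Z : forall n, child_val (ev root) (ti i) n = C0).
  { intros n. destruct (child_val_cases (ev root) (ti i) n) as [H|[H' H]]; rewrite H; [reflexivity|].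
    unfold ev, indv, isw. destruct (list_eq_dec _ _ _); [discriminate|reflexivity]. }
  unfold Lop. rewrite !(series_value_eq _ 0); [reflexivity| |];
  apply (infinite_sum_ev _ _ 0); intros n _; apply sum_zero; intros k; rewrite Z; reflexivity.
Qed.

Lemma Lop_xN_root N : re (Lop (xN N) root) = INR N.
Proof.
  unfold Lop. cbn [re]. apply series_value_eq.
  apply (infinite_sum_ev _ _ (2 * N)). intros m Hm.
  rewrite <- (sum_fN N m Hm). apply sum_eq. intros k _.
  rewrite (child_val_red _ root k eq_refl). reflexivity.
Qed.

Lemma part2 : ~ (exists Lam : vec -> vec,
       (forall x y, in_l1 x -> in_l1 y -> Lam (vadd x y) = vadd (Lam x) (Lam y)) /\
       (forall (c : Cplx) x, in_l1 x -> Lam (vscale c x) = vscale c (Lam x)) /\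
       (forall g ginv, is_aut g ginv ->
          forall x, in_l1 x -> Lam (act ginv x) = act ginv (Lam x)) /\
       (exists K : R, forall x, in_l1 x ->
          in_l2 (vsub (Lop x) (Lam x)) /\ l2_bound (vsub (Lop x) (Lam x)) x K)).
Proof.
  intros [Lam [Hadd [Hsc [Hcomm [K HK]]]]].
  destruct (key in_l1 ind_l1 Lam Hadd Hsc Hcomm) as [P1 P2].
  assert (Dev : forall t, in_l1 (ev t)) by (intros t; eapply ind_l1; apply ev_supp).
  set (c := Lam (ev root) (ti 0)) in *.
  assert (Hc : re c = 0).
  { destruct (HK _ (Dev root)) as [Hl _].
    assert (Hv : forall i, vsub (Lop (ev root)) (Lam (ev root)) (ti i) = Csub C0 c).
    { intros i. unfold vsub. rewrite Lop_ev_root, P1. reflexivity. }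
    pose proof (const_l2_zero _ _ Hv Hl) as H0.
    unfold Cnorm2, Csub, C0 in H0; simpl in H0. nra. }
  apply (final_contra K (fun N => vsub (Lop (xN N)) (Lam (xN N)))).
  - intros N. unfold vsub, Cnorm2, Csub. cbn [re im].
    rewrite Lop_xN_root, P2, Hc. match goal with |- _ <= _ + ?u * ?u => pose proof (Rle_0_sqr u); unfold Rsqr in *; nra end.
  - intros N. apply HK. eapply ind_l1. apply xN_supp.
Qed.

Theorem mainTheorem5 :
  (* (1) *)
  ~ (exists Lam : vec -> vec,
       (forall x y, in_l2 x -> in_l2 y -> Lam (vadd x y) = vadd (Lam x) (Lam y)) /\
       (forall (c : Cplx) x, in_l2 x -> Lam (vscale c x) = vscale c (Lam x)) /\
       (forall g ginv, is_aut g ginv ->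
          forall x, in_l2 x -> Lam (act ginv x) = act ginv (Lam x)) /\
       (exists K : R, forall x, in_l2 x ->
          in_l2 (vsub (Rop x) (Lam x)) /\ l2_bound (vsub (Rop x) (Lam x)) x K))
  /\
  (* (2) *)
  ~ (exists Lam : vec -> vec,
       (forall x y, in_l1 x -> in_l1 y -> Lam (vadd x y) = vadd (Lam x) (Lam y)) /\
       (forall (c : Cplx) x, in_l1 x -> Lam (vscale c x) = vscale c (Lam x)) /\
       (forall g ginv, is_aut g ginv ->
          forall x, in_l1 x -> Lam (act ginv x) = act ginv (Lam x)) /\
       (exists K : R, forall x, in_l1 x ->
          in_l2 (vsub (Lop x) (Lam x)) /\ l2_bound (vsub (Lop x) (Lam x)) x K)).
Proof.
  split; [exact part1 | exact part2].
Qed.
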